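(* Assume $\delta_0=0$ and $$\mu(\mathcal M,W):=\tfrac12\sup_{\sigma>0}\frac{\delta_\sigma}{\sigma}<\infty.$$ Then for every $u\in\mathcal M$ with $w=P_Wu$, the estimator $u^*=u^*(w)$ obtained by surrogate model selection satisfies $$\|u-u^*\|\le C\min_{k=1,\dots,K}\|u-u_k^*(w)\|,\qquad C:=2\mu(\mathcal M,W)\kappa.$$ If moreover the family is $\sigma$-admissible for some $\sigma>0$, then $\|u-u^*\|\le C\sigma$.
   Context: Let $V$ be a real Hilbert space with norm $\|\cdot\|$. Let $Y\subset\mathbb R^d$ be compact and let $y\mapsto u(y)$ be a continuous map from $Y$ to $V$. Set $\mathcal M=\{u(y):y\in Y\}$, which is compact. Let $W\subset V$ be a linear subspace of finite dimension $m$, let $P_W$ be the orthogonal projection onto $W$, and let $W^\perp$ be its orthogonal complement. For $w\in W$ put $V_w=w+W^\perp$. For $\sigma\ge 0$ define - $\mathcal M_\sigma=\{v\in V:\operatorname{dist}(v,\mathcal M)\le\sigma\}$; - $\delta_\sigma=\sup\{\|u-v\|: u,v\in\mathcal M_\sigma,\ u-v\in W^\perp\}$. For a finite-dimensional subspace $E\subset V$ let $\mu(E,W)=\sup_{v\in E\setminus\{0\}}\|v\|/\|P_Wv\|$, with the conventions $\mu(\{0\},W)=1$ and $\mu(E,W)=+\infty$ if $E\cap W^\perp\ne\{0\}$. A reduced model family consists of: - sets $\mathcal M_1,\dots,\mathcal M_K$ with $\mathcal M=\bigcup_{k=1}^K\mathcal M_k$; - affine spaces $V_k=\bar u_k+\bar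 V_k$, where $\bar u_k\in V$ and $\bar V_k$ is a linear subspace of dimension $n_k\le m$; - numbers $\varepsilon_k\ge\sup_{u\in\mathcal M_k}\operatorname{dist}(u,V_k)$; - constants $\mu_k=\mu(\bar V_k,W)<\infty$. The family is $\sigma$-admissible if $\mu_k\varepsilon_k\le\sigma$ for all $k$. For $w\in W$ the PBDW estimators are $u_k^*(w)=\operatorname{argmin}\{\operatorname{dist}(v,V_k): v\in V_w\}$, $k=1,\dots,K$ (the minimizer is unique). A surrogate is a function $\mathcal S(\cdot,\mathcal M):V\to[0,\infty)$ with $r\operatorname{dist}(v,\mathcal M)\le\mathcal S(v,\mathcal M)\le R\operatorname{dist}(v,\mathcal M)$ for all $v\in V$, where $0<r\le R$ are constants; set $\kappa=R/r$. Surrogate model selection picks $k^*(w)$ as any minimizer of $k\mapsto\mathcal S(u_k^*(w),\mathcal M)$ over $\{1,\dots,K\}$ and sets $u^*(w)=u^*_{k^*(w)}(w)$. *)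

(* Defs.v *)
From HB Require Import structures.
From mathcomp Require Import all_boot all_order all_algebra.
From mathcomp Require Import all_classical all_reals all_analysis.
Set Implicit Arguments. Unset Strict Implicit. Unset Printing Implicit Defensive.
Import Order.TTheory GRing.Theory Num.Theory.
Import numFieldNormedType.Exports.
Local Open Scope classical_set_scope.
Local Open Scope ring_scope.

Section Defs.
Context {R : realType} {V : normedModType R}.

Definition is_inner_product (ip : V -> V -> R) : Prop :=
  [/\ (forall x y, ip x y = ip y x),
      (forall a x y z, ip (a *: x + y) z = a * ip x z + ip y z)
    & (forall x, ip x x = `|x| ^+ 2)].

Definition lspan (s : seq V) : set V :=
  [set v | exists c : 'I_(size s) -> R, v = \sum_(i < size s) c i *: s`_i].

Definition lin_indep (s : seq V) : Prop :=
  forall c : 'I_(size s) -> R,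
    \sum_(i < size s) c i *: s`_i = 0 -> forall i, c i = 0.

Definition orth (ip : V -> V -> R) (W : set V) : set V :=
  [set v | forall x, W x -> ip v x = 0].

Definition is_orth_proj (ip : V -> V -> R) (W : set V) (P : V -> V) : Prop :=
  forall v, W (P v) /\ orth ip W (v - P v).

Definition affine (ubar : V) (b : seq V) : set V :=
  [set ubar + x | x in lspan b].

Definition Vw (ip : V -> V -> R) (W : set V) (w : V) : set V :=
  [set v | orth ip W (v - w)].

Definition setdist (v : V) (A : set V) : R := inf [set `|v - x| | x in A].

Definition Msig (M : set V) (s : R) : set V := [set v | setdist v M <= s].

Definition delta (ip : V -> V -> R) (W M : set V) (s : R) : \bar R :=
  ereal_sup [set (`|p.1 - p.2|)%:E | p in
     [set p : V * V | [/\ Msig M s p.1, Msig M s p.2 & orth ip W (p.1 - p.2)]]].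

Definition muMW (ip : V -> V -> R) (W M : set V) : \bar R :=
  ((2^-1)%:E * ereal_sup [set (delta ip W M s * (s^-1)%:E)%E | s in [set s : R | (0 < s)%R]])%E.

Definition muEW (ip : V -> V -> R) (W : set V) (P : V -> V) (E : set V) : \bar R :=
  if `[< exists v, [/\ E v, v != 0 & orth ip W v] >] then +oo%E
  else if `[< E `<=` [set 0] >] then 1%E
  else ereal_sup [set (`|v| / `|P v|)%:E | v in [set v | E v /\ v != 0]].

End Defs.

(* Main.v *)
Require Import Defs.
From HB Require Import structures.
From mathcomp Require Import all_boot all_order all_algebra.
From mathcomp Require Import all_classical all_reals all_analysis.
From mathcomp Require Import ring lra.
Import Order.TTheory GRing.Theory Num.Theory.
Import numFieldNormedType.Exports.
Local Open Scope classical_set_scope.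
Local Open Scope ring_scope.


Section Aux.
Context {R : realType} {V : normedModType R}.

Lemma setdist_le (v : V) (A : set V) a : A a -> setdist v A <= `|v - a|.
Proof.
move=> Aa; apply: ge_inf; last by exists a.
by exists 0 => _ [y _ <-].
Qed.

Lemma setdist_ge (v : V) (A : set V) c : A !=set0 ->
  (forall a, A a -> c <= `|v - a|) -> c <= setdist v A.
Proof.
move=> [a Aa] H; apply: lb_le_inf; first by exists `|v - a|, a.
by move=> _ [y Ay <-]; apply: H.
Qed.

Lemma setdist_ge0 (v : V) (A : set V) : A !=set0 -> 0 <= setdist v A.
Proof. by move=> A0; apply: setdist_ge. Qed.

Lemma setdist_approx (v : V) (A : set V) e : A !=set0 -> 0 < e ->
  exists2 a, A a & `|v - a| < setdist v A + e.
Proof.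
move=> [a Aa] e0.
have [y [z Az <-] lt] : exists2 y, [set `|v - x| | x in A] y & y < setdist v A + e.
  apply: inf_lt; first by exists `|v - a|, a.
  by rewrite ltrDl.
by exists z.
Qed.

End Aux.



Section IP.
Context {R : realType} {V : normedModType R}.
Variable ip : V -> V -> R.
Hypothesis Hip : is_inner_product ip.

Lemma ipC x y : ip x y = ip y x.
Proof. by case: Hip. Qed.

Lemma ipL a x y z : ip (a *: x + y) z = a * ip x z + ip y z.
Proof. by case: Hip. Qed.

Lemma ipn x : ip x x = `|x| ^+ 2.
Proof. by case: Hip. Qed.

Lemma ip0l z : ip 0 z = 0.
Proof.
have := ipL 1 0 0 z; rewrite scale1r addr0 mul1r => h; lra.
Qed.

Lemma ipZl a x z : ip (a *: x) z = a * ip x z.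
Proof. by have := ipL a x 0 z; rewrite addr0 ip0l addr0. Qed.

Lemma ipDl x y z : ip (x + y) z = ip x z + ip y z.
Proof. by have := ipL 1 x y z; rewrite scale1r mul1r. Qed.

Lemma ipNl x z : ip (- x) z = - ip x z.
Proof. by rewrite -scaleN1r ipZl mulN1r. Qed.

Lemma ipBl x y z : ip (x - y) z = ip x z - ip y z.
Proof. by rewrite ipDl ipNl. Qed.

Lemma ipDr x y z : ip z (x + y) = ip z x + ip z y.
Proof. by rewrite ipC ipDl !(ipC z). Qed.

Lemma ipZr a x z : ip z (a *: x) = a * ip z x.
Proof. by rewrite ipC ipZl ipC. Qed.

Lemma ipBr x y z : ip z (x - y) = ip z x - ip z y.
Proof. by rewrite ipC ipBl !(ipC z). Qed.

Lemma ip0r z : ip z 0 = 0.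
Proof. by rewrite ipC ip0l. Qed.

Lemma normD2 x y : `|x + y| ^+ 2 = `|x| ^+ 2 + 2 * ip x y + `|y| ^+ 2.
Proof.
rewrite -!ipn ipDl !ipDr (ipC y x); lra.
Qed.

Lemma orthB W x y : orth ip W x -> orth ip W y -> orth ip W (x - y).
Proof. by move=> Hx Hy z Wz; rewrite ipBl Hx // Hy // subr0. Qed.

Lemma orthD W x y : orth ip W x -> orth ip W y -> orth ip W (x + y).
Proof. by move=> Hx Hy z Wz; rewrite ipDl Hx // Hy // addr0. Qed.

Lemma orthZ W a x : orth ip W x -> orth ip W (a *: x).
Proof. by move=> Hx z Wz; rewrite ipZl Hx // mulr0. Qed.

End IP.
Arguments ipC {R V ip} Hip x y.
Arguments ipL {R V ip} Hip a x y z.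
Arguments ipn {R V ip} Hip x.
Arguments ip0l {R V ip} Hip z.
Arguments ipZl {R V ip} Hip a x z.
Arguments ipDl {R V ip} Hip x y z.
Arguments ipNl {R V ip} Hip x z.
Arguments ipBl {R V ip} Hip x y z.
Arguments ipDr {R V ip} Hip x y z.
Arguments ipZr {R V ip} Hip a x z.
Arguments ipBr {R V ip} Hip x y z.
Arguments ip0r {R V ip} Hip z.
Arguments normD2 {R V ip} Hip x y.
Arguments orthB {R V ip} Hip {W x y}.
Arguments orthD {R V ip} Hip {W x y}.
Arguments orthZ {R V ip} Hip {W} a {x}.


Section Span.
Context {R : realType} {V : normedModType R}.

Lemma lspan_lin {s : seq V} a {x y} : lspan s x -> lspan s y -> lspan s (a *: x + y).
Proof.
move=> [cx ->] [cy ->]; exists (fun i => a * cx i + cy i).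
rewrite scaler_sumr -big_split /=; apply: eq_bigr => i _.
by rewrite scalerDl scalerA.
Qed.

Lemma lspan0 (s : seq V) : lspan s 0.
Proof. by exists (fun _ => 0); rewrite big1 // => i _; rewrite scale0r. Qed.

Lemma lspanB (s : seq V) x y : lspan s x -> lspan s y -> lspan s (x - y).
Proof.
move=> Hx Hy; have := lspan_lin (-1) Hy Hx.
by rewrite scaleN1r addrC.
Qed.

Lemma lspanZ (s : seq V) a x : lspan s x -> lspan s (a *: x).
Proof. by move=> Hx; have := lspan_lin a Hx (lspan0 s); rewrite addr0. Qed.

Lemma affine_diff ub (s : seq V) y y' : affine ub s y -> affine ub s y' -> lspan s (y - y').
Proof.
move=> [g Hg <-] [g' Hg' <-].
by rewrite opprD addrACA subrr add0r; apply: lspanB.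
Qed.

Lemma affine_add ub (s : seq V) y g : affine ub s y -> lspan s g -> affine ub s (y + g).
Proof.
move=> [h Hh <-] Hg; exists (h + g); last by rewrite addrA.
by have := lspan_lin 1 Hh Hg; rewrite scale1r.
Qed.

End Span.
Arguments lspanB {R V s x y}.
Arguments lspanZ {R V s} a {x}.
Arguments affine_diff {R V ub s y y'}.
Arguments affine_add {R V ub s y g}.



Section Core.
Context {R : realType} {V : normedModType R}.
Variable ip : V -> V -> R.
Hypothesis Hip : is_inner_product ip.

Lemma sq_le {p q : R} : 0 <= q -> p ^+ 2 <= q ^+ 2 -> `|p| <= q.
Proof.
move=> q0 h; have hp : `|p| ^+ 2 = p ^+ 2 by rewrite real_normK ?num_real.
have ha := normr_ge0 p. nra.
Qed.

Lemma approx_orth (d m : V) (D dl : R) : 0 <= D -> 0 <= dl ->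
  `|d| ^+ 2 <= D ^+ 2 + dl ^+ 2 ->
  (forall s, D <= `|d + s *: m|) -> `|ip d m| <= dl * `|m|.
Proof.
move=> D0 dl0 hd hs.
have key : forall s, 0 <= dl ^+ 2 + 2 * s * ip d m + s ^+ 2 * `|m| ^+ 2.
  move=> s; have h1 := hs s.
  have h2 : D ^+ 2 <= `|d + s *: m| ^+ 2.
    by rewrite ler_sqr ?nnegrE // normr_ge0.
  move: h2; rewrite (normD2 Hip) (ipZr Hip) normrZ exprMn real_normK ?num_real //.
  lra.
have [m0|mpos] := eqVneq `|m| 0.
  have m0' : m = 0 by apply: normr0_eq0.
  subst m. by rewrite (ip0r Hip) normr0 m0 mulr0.
have mp : 0 < `|m| by rewrite lt_def mpos normr_ge0.
apply: sq_le; first by apply: mulr_ge0.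
have := key (- ip d m / `|m| ^+ 2).
set p := ip d m; set M := `|m|.
have M2 : 0 < M ^+ 2 by apply: exprn_gt0.
have -> : dl ^+ 2 + 2 * (- p / M ^+ 2) * p + (- p / M ^+ 2) ^+ 2 * M ^+ 2
   = dl ^+ 2 - p ^+ 2 / M ^+ 2.
  by field; rewrite gt_eqF.
rewrite subr_ge0 ler_pdivrMr // => h.
by rewrite exprMn.
Qed.

End Core.
Arguments approx_orth {R V ip} Hip {d m D dl}.



Section Core2.
Context {R : realType} {V : normedModType R}.
Variable ip : V -> V -> R.
Hypothesis Hip : is_inner_product ip.

Lemma sum_id (x z us y p : V) : x - z = x - us + (y - z - p) + (p + (us - y)).
Proof.
symmetry; rewrite -addrA [X in _ + X = _]addrA subrK.
rewrite [X in _ + X = _]addrC [X in _ + X = _]addrA subrK.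
by rewrite addrA subrK.
Qed.

Lemma key1 (t s a c G mu : R) : 0 <= t -> 0 <= s -> 0 <= a -> 0 <= c -> 0 <= G ->
  1 <= mu -> G ^+ 2 = a ^+ 2 + c ^+ 2 -> G <= mu * a -> t <= s + c ->
  t ^+ 2 <= mu ^+ 2 * (s ^+ 2 + a ^+ 2).
Proof.
move=> t0 s0 a0 c0 G0 mu1 hG hGa hts.
have hG2 : a ^+ 2 + c ^+ 2 <= mu ^+ 2 * a ^+ 2.
  rewrite -hG -exprMn ler_sqr ?nnegrE //; nra.
have ht2 : t ^+ 2 <= (s + c) ^+ 2 by rewrite ler_sqr ?nnegrE //; lra.
have [a0'|apos] := eqVneq a 0.
  subst a. have c00 : c ^+ 2 <= 0 by lra.
  have c0' : c = 0.
    have : c ^+ 2 = 0 by have := sqr_ge0 c; lra.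
    by move/eqP; rewrite expf_eq0 /= => /eqP.
  subst c. rewrite addr0 in ht2.
  have m2 : 1 <= mu ^+ 2 by nra.
  have : 0 <= (mu ^+ 2 - 1) * (s ^+ 2) by apply: mulr_ge0; [lra | apply: sqr_ge0].
  have -> : (0:R) ^+ 2 = 0 by rewrite expr0n.
  lra.
have ap : 0 < a by rewrite lt_def apos a0.
have h1 : a ^+ 2 * (s + c) ^+ 2 <= (s ^+ 2 + a ^+ 2) * (a ^+ 2 + c ^+ 2).
  have : 0 <= (s * c - a ^+ 2) ^+ 2 by apply: sqr_ge0.
  lra.
have h2 : a ^+ 2 * (s + c) ^+ 2 <= a ^+ 2 * (mu ^+ 2 * (s ^+ 2 + a ^+ 2)).
  apply: le_trans h1 _. nra.
have a2 : 0 < a ^+ 2 by apply: exprn_gt0.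
rewrite ler_pM2l // in h2. lra.
Qed.


Lemma pbdw_bound (W : set V) (P : V -> V) (bs : seq V) (ub : V) (mu : R) :
  is_orth_proj ip W P -> 1 <= mu ->
  (forall g, lspan bs g -> `|g| <= mu * `|P g|) ->
  forall x us, Vw ip W (P x) us ->
  (forall v, Vw ip W (P x) v -> setdist us (affine ub bs) <= setdist v (affine ub bs)) ->
  `|x - us| <= mu * setdist x (affine ub bs).
Proof.
move=> HP mu1 Hmu x us Hus Hmin.
set A := affine ub bs.
have A0 : A !=set0 by exists ub; exists 0; [exact: lspan0 | rewrite addr0].
have mu0 : 0 < mu by apply: lt_le_trans mu1.
have Npx : orth ip W (x - P x) := (HP x).2.
have He : orth ip W (x - us).
  by have := orthB Hip Npx Hus; rewrite opprB addrA subrK.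
suff Hz : forall z, A z -> `|x - us| <= mu * `|x - z|.
  rewrite -ler_pdivrMl //; apply: setdist_ge => // a Aa.
  by rewrite ler_pdivrMl //; apply: Hz.
move=> z Az.
set D := setdist us A.
have D0 : 0 <= D := setdist_ge0 us A A0.
set t := `|x - us|; set n := `|x - z|.
set B0 := t + 3 * (D + 1 + `|us - z|).
have B00 : 0 <= B0 by rewrite /B0 /t; have := normr_ge0 (us - z); have := normr_ge0 (x - us); lra.
suff Hd : forall dl, 0 < dl -> t ^+ 2 <= mu ^+ 2 * n ^+ 2 + 2 * mu ^+ 2 * B0 * dl.
  have : t ^+ 2 <= (mu * n) ^+ 2.
    apply/ler_addgt0Pr => e e0.
    set K := 2 * mu ^+ 2 * B0.
    have K0 : 0 <= K by rewrite /K; apply: mulr_ge0 => //; apply: mulr_ge0 => //; apply: sqr_ge0.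
    have K1 : 0 < K + 1 by lra.
    have := Hd (e / (K + 1)) (divr_gt0 e0 K1).
    rewrite exprMn => h; apply: le_trans h _; rewrite lerD2l.
    rewrite mulrA ler_pdivrMr // -/K; nra.
  move=> h; have := sq_le (mulr_ge0 (ltW mu0) (normr_ge0 (x - z))) h.
  by rewrite normr_id.
move=> dl dl0.
set eta0 := Num.min 1 (dl ^+ 2 / (2 * D + 1)).
have D1 : 0 < 2 * D + 1 by lra.
have eta0p : 0 < eta0 by rewrite /eta0 lt_min ltr01 /= divr_gt0 // exprn_gt0.
have eta01 : eta0 <= 1 by rewrite /eta0 ge_min lexx.
have eta0d : eta0 * (2 * D + 1) <= dl ^+ 2.
  have : eta0 <= dl ^+ 2 / (2 * D + 1) by rewrite /eta0 ge_min lexx orbT.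
  by rewrite ler_pdivlMr.
have [y Ay Hy] := @setdist_approx _ _ us A eta0 A0 eta0p.
set d := us - y.
have d0 := normr_ge0 d.
have hd2 : `|d| ^+ 2 <= D ^+ 2 + dl ^+ 2.
  have : `|d| ^+ 2 <= (D + eta0) ^+ 2 by rewrite ler_sqr ?nnegrE //; [lra | lra].
  nra.
have hO : forall m, (orth ip W m \/ lspan bs m) -> `|ip d m| <= dl * `|m|.
  move=> m Hm; apply: (approx_orth Hip D0 (ltW dl0) hd2) => s.
  case: Hm => Hm.
  - have Hv : Vw ip W (P x) (us + s *: m).
      rewrite /Vw /=; rewrite addrAC.
      exact: (orthD Hip Hus (orthZ Hip _ Hm)).
    apply: le_trans (Hmin _ Hv) _.
    by have := setdist_le (us + s *: m) _ _ Ay; rewrite addrAC.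
  - have Ay' : A (y + (- s) *: m) by apply: affine_add Ay (lspanZ (-s) Hm).
    apply: le_trans (setdist_le us _ _ Ay') _.
    by rewrite scaleNr opprD opprK addrA.
set e := x - us.
set g := y - z.
set p := P g.
set q := g - p.
have Eg : lspan bs g := affine_diff Ay Az.
have Wp : W p := (HP g).1.
have Nq : orth ip W q := (HP g).2.
have Neq : orth ip W (e + q) := orthD Hip He Nq.
have hsum : x - z = (e + q) + (p + d) by apply: sum_id.
have hp : p = g - q by rewrite /q opprB addrC subrK.
have hg : g = p + q by rewrite /q addrC subrK.
have ipeqp : ip (e + q) p = 0 by apply: Neq.
have ipqp : ip p q = 0 by rewrite (ipC Hip); apply: Nq.
have b1 := hO _ (or_introl Neq).
have b2 := hO _ (or_intror Eg).
have b3 := hO _ (or_introl Nq).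
rewrite !ler_norml in b1 b2 b3.
move/andP: b1 => [b1l b1r]. move/andP: b2 => [b2l b2r]. move/andP: b3 => [b3l b3r].
set sN := `|e + q|; set a := `|p|; set c := `|q|; set G := `|g|.
rewrite -/sN -/G -/c in b1l b1r b2l b2r b3l b3r.
have F1 : n ^+ 2 = sN ^+ 2 + 2 * ip d (e + q) + (a ^+ 2 + 2 * (ip d g - ip d q) + `|d| ^+ 2).
  rewrite /n hsum (normD2 Hip (e + q) (p + d)) (normD2 Hip p d) (ipDr Hip) ipeqp add0r (ipC Hip (e + q) d).
  by rewrite -(ipBr Hip) -hp (ipC Hip p d).
have F2 : G ^+ 2 = a ^+ 2 + c ^+ 2.
  by rewrite /G hg (normD2 Hip) ipqp mulr0 addr0.
have F3 : G <= mu * a := Hmu g Eg.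
have F4 : t <= sN + c by have := ler_normB (e + q) q; rewrite addrK.
have F5 : sN <= t + c by apply: ler_normD.
have F6 : G <= `|d| + `|us - z|.
  by have := ler_distD us y z; rewrite (distrC y us).
have dD : `|d| <= D + 1 by lra.
have sN0 : 0 <= sN := normr_ge0 _.
have a0 : 0 <= a := normr_ge0 _.
have c0 : 0 <= c := normr_ge0 _.
have G0 : 0 <= G := normr_ge0 _.
have t0 : 0 <= t := normr_ge0 _.
have K1 := key1 t sN a c G mu t0 sN0 a0 c0 G0 mu1 F2 F3 F4.
have cG : c <= G.
  have : c ^+ 2 <= G ^+ 2 by have := sqr_ge0 a; lra.
  by rewrite ler_sqr ?nnegrE.
set S := sN + G + c.
have hS : S <= B0 by rewrite /S /B0; lra.
have d2 : 0 <= `|d| ^+ 2 := sqr_ge0 _.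
have hn : sN ^+ 2 + a ^+ 2 <= n ^+ 2 + 2 * dl * S.
  rewrite F1 /S; lra.
have m2 : 0 <= mu ^+ 2 := sqr_ge0 _.
have h1 : mu ^+ 2 * (sN ^+ 2 + a ^+ 2) <= mu ^+ 2 * (n ^+ 2 + 2 * dl * S).
  by apply: ler_wpM2l.
have h2 : mu ^+ 2 * (2 * dl * S) <= mu ^+ 2 * (2 * dl * B0).
  apply: ler_wpM2l => //; apply: ler_wpM2l => //; lra.
lra.
Qed.

End Core2.



Section MuE.
Context {R : realType} {V : normedModType R}.
Variable ip : V -> V -> R.
Hypothesis Hip : is_inner_product ip.

Lemma proj_le (W : set V) (P : V -> V) v : is_orth_proj ip W P -> `|P v| <= `|v|.
Proof.
move=> HP; have [Wp Nq] := HP v.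
have h : `|v| ^+ 2 = `|P v| ^+ 2 + `|v - P v| ^+ 2.
  have -> : `|v| = `|P v + (v - P v)| by rewrite addrC subrK.
  by rewrite (normD2 Hip) (ipC Hip) Nq // mulr0 addr0.
rewrite -ler_sqr ?nnegrE // h lerDl; exact: sqr_ge0.
Qed.

Lemma muEW_prop (W : set V) (P : V -> V) (E : set V) :
  is_orth_proj ip W P -> (muEW ip W P E < +oo)%E ->
  1 <= fine (muEW ip W P E) /\
  forall g, E g -> `|g| <= fine (muEW ip W P E) * `|P g|.
Proof.
move=> HP; rewrite /muEW.
case: asboolP => [_|H1]; first by rewrite ltxx.
case: asboolP => [H2 _|H2 Hfin].
  split => //= g Eg; have -> : g = 0 by apply: H2.
  by rewrite normr0 mul1r normr_ge0.
have [v [Ev v0]] : exists v, E v /\ v != 0.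
  apply: contrapT => hn; apply: H2 => v' Ev'; apply: contrapT => nv; apply: hn.
  by exists v'; split => //; apply/eqP.
have Pnz : forall g, E g -> g != 0 -> 0 < `|P g|.
  move=> g Eg g0; rewrite normr_gt0; apply/negP => /eqP Pg0; apply: H1.
  exists g; split => //; have := (HP g).2; by rewrite Pg0 subr0.
set Sp := [set _ | _ in _].
have ub : forall g, E g -> g != 0 -> ((`|g| / `|P g|)%:E <= ereal_sup Sp)%E.
  by move=> g Eg g0; apply: ereal_sup_ubound; exists g.
have r1 : 1 <= `|v| / `|P v|.
  by rewrite ler_pdivlMr ?Pnz // mul1r (proj_le W P v HP).
rewrite -/Sp in Hfin.
move: Hfin ub; case: (ereal_sup Sp) => [s| |] Hfin ub //=.
- split; first by apply: le_trans r1 _; rewrite -lee_fin; apply: ub Ev v0.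
  move=> g Eg; have [->|g0] := eqVneq g 0.
    rewrite normr0; apply: mulr_ge0; last exact: normr_ge0.
    apply: le_trans ler01 (le_trans r1 _); rewrite -lee_fin; apply: ub Ev v0.
  by rewrite -ler_pdivrMr ?Pnz //; rewrite -lee_fin; apply: ub Eg g0.
- by have := ub v Ev v0.
Qed.

End MuE.



Theorem theorem3p4 (R : realType) (V : completeNormedModType R)
  (ip : V -> V -> R)
  (d : nat) (Y : set 'rV[R]_d) (u : 'rV[R]_d -> V)
  (eW : seq V) (P : V -> V)
  (K : nat) (Mk : 'I_K -> set V) (ubar : 'I_K -> V) (b : 'I_K -> seq V)
  (eps : 'I_K -> R) (ustar : 'I_K -> V -> V)
  (S : V -> R) (r RR : R) :
  is_inner_product ip ->
  compact Y -> {within Y, continuous u} ->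
  (* W = lspan eW, of dimension m = size eW, P = P_W *)
  lin_indep eW -> is_orth_proj ip (lspan eW) P ->
  (* reduced model family *)
  u @` Y = \bigcup_(k in [set: 'I_K]) Mk k ->
  (forall k, lin_indep (b k) /\ (size (b k) <= size eW)%N) ->
  (forall k x, Mk k x -> setdist x (affine (ubar k) (b k)) <= eps k) ->
  (forall k, (muEW ip (lspan eW) P (lspan (b k)) < +oo)%E) ->
  (* PBDW estimators: u_k^*(w) minimizes setdist(., V_k) over V_w *)
  (forall k w, lspan eW w ->
     Vw ip (lspan eW) w (ustar k w) /\
     (forall v, Vw ip (lspan eW) w v ->
        setdist (ustar k w) (affine (ubar k) (b k)) <= setdist v (affine (ubar k) (b k)))) ->
  (* surrogate *)
  0 < r -> r <= RR ->
  (forall v, r * setdist v (u @` Y) <= S v /\ S v <= RR * setdist v (u @` Y)) ->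
  (* assumptions of the theorem *)
  delta ip (lspan eW) (u @` Y) 0 = 0%E ->
  (muMW ip (lspan eW) (u @` Y) < +oo)%E ->
  forall x, (u @` Y) x ->
  forall ks : 'I_K, (forall k, S (ustar ks (P x)) <= S (ustar k (P x))) ->
  (forall k, `|x - ustar ks (P x)|
       <= 2 * fine (muMW ip (lspan eW) (u @` Y)) * (RR / r) * `|x - ustar k (P x)|) /\
  (forall sigma, 0 < sigma ->
     (forall k, fine (muEW ip (lspan eW) P (lspan (b k))) * eps k <= sigma) ->
     `|x - ustar ks (P x)| <= 2 * fine (muMW ip (lspan eW) (u @` Y)) * (RR / r) * sigma).
Proof.
move=> Hip cY cu Hind HP Hunion Hb Heps Hmuk Hstar r0 rR HS Hdelta0 HmuM x Mx ks Hks.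
set M := u @` Y.
set W := lspan eW.
have M0 : M !=set0 by exists x.
have WPx : W (P x) := (HP x).1.
set us := ustar ks (P x).
set sg := setdist us M.
have sg0 : 0 <= sg := setdist_ge0 us M M0.
have Nx : orth ip W (x - P x) := (HP x).2.
have Nus : orth ip W (x - us).
  by have := orthB Hip Nx (Hstar ks (P x) WPx).1; rewrite opprB addrA subrK.
have xM : forall s, 0 <= s -> Msig M s x.
  move=> s s0; rewrite /Msig /=; apply: le_trans (setdist_le x M x Mx) _.
  by rewrite subrr normr0.
have dl_lb : forall s a1 b1, Msig M s a1 -> Msig M s b1 -> orth ip W (a1 - b1) ->
    ((`|a1 - b1|)%:E <= delta ip W M s)%E.
  by move=> s a1 b1 Ha Hb' Hab; apply: ereal_sup_ubound; exists (a1, b1).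
pose Sup := ereal_sup [set (delta ip W M s * (s^-1)%:E)%E | s in [set s : R | (0 < s)%R]].
have SupE : muMW ip W M = ((2^-1)%:E * Sup)%E by [].
have Sub : forall s, 0 < s -> (delta ip W M s * (s^-1)%:E <= Sup)%E.
  by move=> s s0; apply: ereal_sup_ubound; exists s.
have Sup0 : (0 <= Sup)%E.
  apply: le_trans (Sub 1 ltr01); rewrite invr1 mule1.
  have := dl_lb 1 x x (xM 1 ler01) (xM 1 ler01).
  rewrite subrr normr0; apply.
  by move=> z _; rewrite (ip0l Hip).
have [sv [sv0 [Supv mE]]] : exists sv, 0 <= sv /\ Sup = sv%:E /\ fine (muMW ip W M) = 2^-1 * sv.
  clearbody Sup; move: SupE HmuM Sup0 Sub; case: Sup => [sv| |] -> //=.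
    by move=> _ h _; exists sv.
  by rewrite gt0_muley // lte_fin invr_gt0.
have part1 : `|x - us| <= sv * sg.
  have [sz|sp] := eqVneq sg 0.
    have usM0 : Msig M 0 us by rewrite /Msig /= -/sg sz.
    have := dl_lb 0 x us (xM 0 (lexx 0)) usM0 Nus.
    rewrite Hdelta0 lee_fin => h.
    by apply: le_trans h _; apply: mulr_ge0.
  have sgp : 0 < sg by rewrite lt_def sp sg0.
  have h := dl_lb sg x us (xM sg sg0) (lexx sg) Nus.
  have h2 : ((`|x - us| / sg)%:E <= sv%:E)%E.
    rewrite -Supv; apply: le_trans (Sub sg sgp); rewrite EFinM.
    by apply: lee_wpmul2r => //; rewrite lee_fin invr_ge0.
  by rewrite lee_fin ler_pdivrMr // mulrC in h2.
have C0 : 0 <= 2 * fine (muMW ip W M) * (RR / r).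
  rewrite mE; apply: mulr_ge0; first nra.
  apply: divr_ge0; lra.
have part1' : forall k, `|x - us| <= 2 * fine (muMW ip W M) * (RR / r) * `|x - ustar k (P x)|.
  move=> k; set uk := ustar k (P x).
  have h1 : r * sg <= RR * `|x - uk|.
    apply: le_trans (HS us).1 _; apply: le_trans (Hks k) _.
    apply: le_trans (HS uk).2 _; apply: ler_wpM2l; first lra.
    by rewrite distrC; apply: setdist_le.
  have h2 : sg <= RR / r * `|x - uk|.
    by rewrite mulrAC ler_pdivlMr //; lra.
  apply: le_trans part1 _; rewrite mE.
  have -> : 2 * (2^-1 * sv) * (RR / r) * `|x - uk| = sv * (RR / r * `|x - uk|).
    by rewrite (mulrA 2) mulfV ?mul1r -?mulrA // pnatr_eq0.
  by apply: ler_wpM2l.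
split => //.
move=> sigma sigma0 Hadm.
have [k0 _ Hk0] : (\bigcup_(k in [set: 'I_K]) Mk k) x by rewrite -Hunion.
have [mu1 Hmu] := muEW_prop _ Hip _ _ _ HP (Hmuk k0).
have Hb0 := pbdw_bound _ Hip _ _ _ _ _ HP mu1 Hmu _ _ (Hstar k0 (P x) WPx).1 (Hstar k0 (P x) WPx).2.
have h : `|x - ustar k0 (P x)| <= sigma.
  apply: le_trans Hb0 _; apply: le_trans (Hadm k0).
  by apply: ler_wpM2l; [lra | apply: Heps].
apply: le_trans (part1' k0) _.
by apply: ler_wpM2l.
Qed.
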